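(* Let $A\in\mathbb R^{q\times n}$, $b\in\mathbb R^q$, $c=(c_1,\dots,c_p):\mathbb R^n\to\mathbb R^p$ with each $c_i$ concave and twice continuously differentiable, and $\varepsilon>0$. For $x\in\mathbb R^n$, $y=(y^E,y^I)\in\mathbb R^q\times\mathbb R^p$, $z^I\in\mathbb R^p$ let $$G(x,y,z^I)=\begin{bmatrix}A^Ty^E+\mathcal Jc(x)^Ty^I\\ Ax-b+y^E\\ c(x)+y^I-z^I\end{bmatrix},\qquad F_\varepsilon(x,y,z^I)=\begin{bmatrix}G(x,y,z^I)\\ \Psi_\varepsilon(y^I,z^I)\end{bmatrix},$$ and $\Phi(\varepsilon)=\{(x,y^E,y^I,z^I)\in\mathbb R^n\times\mathbb R^q\times\mathbb R^p\times\mathbb R^p: F_\varepsilon(x,y,z^I)=0\}$. Let $(x,y,z^I)\in\Phi(\varepsilon)$ and suppose that the $n\times n$ matrix $$\sum_{i=1}^p y^I_i\nabla^2c_i(x)-A^TA-\mathcal Jc(x)^T\mathcal J_{z^I}\Psi_\varepsilon(y^I,z^I)\mathcal Jc(x)$$ is nonsingular. Then the Jacobian $\mathcal JF_\varepsilon(x,y,z^I)$ has full row rank, and $$T_{\Phi(\varepsilon)}(x,y,z^I)=\{d\in\mathbb R^n\times\mathbb R^{q+p}\times\mathbb R^p:\mathcal JF_\varepsilon(x,y,z^I)d=0\},$$ $$N_{\Phi(\varepsilon)}(x,y,z^I)=\widehat N_{\Phi(\varepsilon)}(x,y,z^I)=\mathcal JF_\varepsilon(x,y,z^I)^T\mathbb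 R^{n+q+p+p}.$$
   Context: $\mathcal Jc(x)$ is the $p\times n$ Jacobian of $c$. $\psi_\varepsilon(a,b)=a+b-\sqrt{a^2+b^2+2\varepsilon^2}$ (smoothing Fischer–Burmeister function) and $\Psi_\varepsilon(y^I,z^I)=(\psi_\varepsilon(y^I_1,z^I_1),\dots,\psi_\varepsilon(y^I_p,z^I_p))$; $\mathcal J_{z^I}\Psi_\varepsilon(y^I,z^I)$ is the diagonal matrix with entries $1-z^I_i/\sqrt{(y^I_i)^2+(z^I_i)^2+2\varepsilon^2}$. The Jacobian of $F_\varepsilon$ with respect to $(x,y^E,y^I,z^I)$ is $\begin{bmatrix}\sum_i y^I_i\nabla^2c_i(x) & A^T & \mathcal Jc(x)^T & 0\\ A & I & 0 & 0\\ \mathcal Jc(x) & 0 & I & -I\\ 0 & 0 & \mathcal J_{y^I}\Psi_\varepsilon & \mathcal J_{z^I}\Psi_\varepsilon\end{bmatrix}$. $T_C$, $\widehat N_C$, $N_C$ denote the tangent cone, regular normal cone and limiting normal cone of a closed set $C$. *)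

(* Defs.v *)
From HB Require Import structures.
From mathcomp Require Import all_boot all_order all_algebra.
From mathcomp Require Import all_classical all_reals all_analysis.
Set Implicit Arguments. Unset Strict Implicit. Unset Printing Implicit Defensive.
Import Order.TTheory GRing.Theory Num.Theory.
Import numFieldNormedType.Exports.
Local Open Scope classical_set_scope.
Local Open Scope ring_scope.

Section Defs.
Variable R : realType.

Definition evec (n : nat) (j : 'I_n) : 'cV[R]_n := delta_mx j 0.

Definition compf (n p : nat) (c : 'cV[R]_n -> 'cV[R]_p) (i : 'I_p)
  : 'cV[R]_n -> R := fun x => c x i 0.

Definition pderiv (n : nat) (f : 'cV[R]_n -> R) (j : 'I_n) : 'cV[R]_n -> R :=
  fun x => 'D_(evec j) f x.

Definition jacob (n p : nat) (c : 'cV[R]_n -> 'cV[R]_p) (x : 'cV[R]_n)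
  : 'M[R]_(p, n) := \matrix_(i, j) pderiv (compf c i) j x.

Definition hessian (n : nat) (f : 'cV[R]_n -> R) (x : 'cV[R]_n) : 'M[R]_n :=
  \matrix_(j, k) pderiv (pderiv f j) k x.

Definition C2 (n : nat) (f : 'cV[R]_n -> R) : Prop :=
  (forall x, differentiable f x) /\
  (forall j x, differentiable (pderiv f j) x) /\
  (forall j k, continuous (pderiv (pderiv f j) k)).

Definition concave_fun (n : nat) (f : 'cV[R]_n -> R) : Prop :=
  forall (x y : 'cV[R]_n) (t : R), 0 <= t <= 1 ->
    t * f x + (1 - t) * f y <= f (t *: x + (1 - t) *: y).

Definition psi (eps a b : R) : R := a + b - Num.sqrt (a ^+ 2 + b ^+ 2 + 2 * eps ^+ 2).

Definition Psi (p : nat) (eps : R) (yI zI : 'cV[R]_p) : 'cV[R]_p :=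
  \col_i psi eps (yI i 0) (zI i 0).

(** diagonal Jacobians of Psi w.r.t. y^I and z^I *)
Definition JyPsi (p : nat) (eps : R) (yI zI : 'cV[R]_p) : 'M[R]_p :=
  \matrix_(i, j) (if i == j then
     1 - yI i 0 / Num.sqrt (yI i 0 ^+ 2 + zI i 0 ^+ 2 + 2 * eps ^+ 2) else 0).
Definition JzPsi (p : nat) (eps : R) (yI zI : 'cV[R]_p) : 'M[R]_p :=
  \matrix_(i, j) (if i == j then
     1 - zI i 0 / Num.sqrt (yI i 0 ^+ 2 + zI i 0 ^+ 2 + 2 * eps ^+ 2) else 0).

(** G and F_eps; the stacked variable is (x, yE, yI, zI) in R^{n+q+p+p} *)
Definition Gmap (n q p : nat) (A : 'M[R]_(q, n)) (b : 'cV[R]_q)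
  (c : 'cV[R]_n -> 'cV[R]_p) (x : 'cV[R]_n) (yE : 'cV[R]_q) (yI zI : 'cV[R]_p)
  : 'cV[R]_(n + q + p) :=
  col_mx (col_mx (A^T *m yE + (jacob c x)^T *m yI) (A *m x - b + yE))
         (c x + yI - zI).

Definition Fmap (n q p : nat) (A : 'M[R]_(q, n)) (b : 'cV[R]_q)
  (c : 'cV[R]_n -> 'cV[R]_p) (eps : R) (x : 'cV[R]_n) (yE : 'cV[R]_q)
  (yI zI : 'cV[R]_p) : 'cV[R]_(n + q + p + p) :=
  col_mx (Gmap A b c x yE yI zI) (Psi eps yI zI).

Definition wx (n q p : nat) (w : 'cV[R]_(n + q + p + p)) : 'cV[R]_n :=
  usubmx (usubmx (usubmx w)).
Definition wyE (n q p : nat) (w : 'cV[R]_(n + q + p + p)) : 'cV[R]_q :=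
  dsubmx (usubmx (usubmx w)).
Definition wyI (n q p : nat) (w : 'cV[R]_(n + q + p + p)) : 'cV[R]_p :=
  dsubmx (usubmx w).
Definition wzI (n q p : nat) (w : 'cV[R]_(n + q + p + p)) : 'cV[R]_p :=
  dsubmx w.

Definition stack (n q p : nat) (x : 'cV[R]_n) (yE : 'cV[R]_q) (yI zI : 'cV[R]_p)
  : 'cV[R]_(n + q + p + p) := col_mx (col_mx (col_mx x yE) yI) zI.

Definition Phi (n q p : nat) (A : 'M[R]_(q, n)) (b : 'cV[R]_q)
  (c : 'cV[R]_n -> 'cV[R]_p) (eps : R) : set 'cV[R]_(n + q + p + p) :=
  [set w | Fmap A b c eps (wx w) (wyE w) (wyI w) (wzI w) = 0].

Definition JF (n q p : nat) (A : 'M[R]_(q, n)) (c : 'cV[R]_n -> 'cV[R]_p)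
  (eps : R) (x : 'cV[R]_n) (yE : 'cV[R]_q) (yI zI : 'cV[R]_p)
  : 'M[R]_(n + q + p + p, n + q + p + p) :=
  let Jc := jacob c x in
  let H := \sum_(i < p) yI i 0 *: hessian (compf c i) x in
  col_mx
   (col_mx
     (col_mx (row_mx (row_mx (row_mx H A^T) Jc^T) 0)
             (row_mx (row_mx (row_mx A 1%:M) 0) 0))
     (row_mx (row_mx (row_mx Jc 0) 1%:M) (- 1%:M)))
   (row_mx (row_mx (row_mx 0 0) (JyPsi eps yI zI)) (JzPsi eps yI zI)).

Definition dotv (N : nat) (u v : 'cV[R]_N) : R := \sum_(i < N) u i 0 * v i 0.
Definition enorm (N : nat) (u : 'cV[R]_N) : R := Num.sqrt (dotv u u).

Definition tangent_cone (N : nat) (C : set 'cV[R]_N) (x : 'cV[R]_N)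
  : set 'cV[R]_N :=
  [set d | exists (t : nat -> R) (u : nat -> 'cV[R]_N),
     [/\ (forall k, 0 < t k), t @ \oo --> 0, u @ \oo --> d &
         (forall k, C (x + t k *: u k))]].

(** regular (Frechet) normal cone: v with
    limsup_{y ->_C x, y <> x} <v, y - x> / |y - x| <= 0 ; empty if x \notin C *)
Definition regular_normal_cone (N : nat) (C : set 'cV[R]_N) (x : 'cV[R]_N)
  : set 'cV[R]_N :=
  [set v | C x /\ forall e : R, 0 < e -> exists2 delta : R, 0 < delta &
     forall y, C y -> enorm (y - x) < delta -> dotv v (y - x) <= e * enorm (y - x)].

Definition limiting_normal_cone (N : nat) (C : set 'cV[R]_N) (x : 'cV[R]_N)
  : set 'cV[R]_N :=
  [set v | C x /\ exists (xk vk : nat -> 'cV[R]_N),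
     [/\ (forall k, C (xk k)), (forall k, regular_normal_cone C (xk k) (vk k)),
         xk @ \oo --> x & vk @ \oo --> v]].

End Defs.

(* Main.v *)
Require Import Defs.
From HB Require Import structures.
From mathcomp Require Import all_boot all_order all_algebra.
From mathcomp Require Import all_classical all_reals all_analysis.
Import Order.TTheory GRing.Theory Num.Theory.
Import numFieldNormedType.Exports.
Set Implicit Arguments. Unset Strict Implicit. Unset Printing Implicit Defensive.
Local Open Scope classical_set_scope.
Local Open Scope ring_scope.
From mathcomp Require Import ring lra.
Section S.
Variable R : realType.
Definition S1 (N:nat) (h : 'cV[R]_N) : R := \sum_i `|h i 0|.

Lemma S1_ge0 N (h : 'cV[R]_N) : 0 <= S1 h.
Proof. by apply: sumr_ge0 => i _. Qed.

Lemma le_entry_S1 N (h : 'cV[R]_N) i : `|h i 0| <= S1 h.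
Proof.
rewrite /S1 (bigD1 i) //= lerDl; exact: sumr_ge0.
Qed.

Lemma mxnorm_le_S1 N (h : 'cV[R]_N) : `|h| <= S1 h.
Proof.
rewrite [`|h|]mx_normrE; apply: bigmax_le => [|[i j] _]; first exact: S1_ge0.
by rewrite /= (ord1 j); exact: le_entry_S1.
Qed.

Lemma entry_le_mxnorm N (h : 'cV[R]_N) i : `|h i 0| <= `|h|.
Proof.
rewrite [`|h|]mx_normrE; exact: (le_bigmax _ (fun ij : 'I_N * 'I_1 => `|h ij.1 ij.2|) (i, 0)).
Qed.

Lemma S1_le_mxnorm N (h : 'cV[R]_N) : S1 h <= N%:R * `|h|.
Proof.
rewrite /S1 (@le_trans _ _ (\sum_(i < N) `|h|)) //.
  by apply: ler_sum => i _; exact: entry_le_mxnorm.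
by rewrite sumr_const card_ord mulr_natl.
Qed.

Lemma dlin (n : nat) (f : 'cV[R]_n -> R) (x h : 'cV[R]_n) :
  differentiable f x -> 'd f x h = \sum_j h j 0 * pderiv f j x.
Proof.
move=> df; rewrite /pderiv.
under [RHS]eq_bigr do rewrite deriveE //.
rewrite {1}(matrix_sum_delta h) linear_sum /=.
apply: eq_bigr => j _; rewrite big_ord1 linearZ /=.
by rewrite (ord1 0) /evec.
Qed.


Section Small.
Variables (N : nat) (P : 'cV[R]_N -> Prop).

Definition small (Q : 'cV[R]_N -> R) := forall e : R, 0 < e -> exists2 d : R, 0 < d &
  forall h, P h -> S1 h < d -> `|Q h| <= e * S1 h.
Definition bnd (Q : 'cV[R]_N -> R) := exists2 M : R, 0 < M & exists2 d : R, 0 < d &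
  forall h, P h -> S1 h < d -> `|Q h| <= M * S1 h.

Lemma small_ext Q1 Q2 : (forall h, P h -> Q1 h = Q2 h) -> small Q1 -> small Q2.
Proof.
move=> E s e e0; have [d d0 H] := s e e0; exists d => // h Ph hd.
by rewrite -E //; apply: H.
Qed.

Lemma bnd_ext Q1 Q2 : (forall h, P h -> Q1 h = Q2 h) -> bnd Q1 -> bnd Q2.
Proof.
move=> E [M M0 [d d0 H]]; exists M => //; exists d => // h Ph hd.
by rewrite -E //; apply: H.
Qed.

Lemma small0 : small (fun _ => 0).
Proof.
move=> e e0; exists 1 => // h _ _; rewrite normr0 mulr_ge0 ?S1_ge0 //; exact: ltW.
Qed.

Lemma smallD Q1 Q2 : small Q1 -> small Q2 -> small (fun h => Q1 h + Q2 h).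
Proof.
move=> s1 s2 e e0.
have e2 : 0 < e / 2 by rewrite divr_gt0.
have [d1 d10 H1] := s1 _ e2; have [d2 d20 H2] := s2 _ e2.
exists (Num.min d1 d2); first by rewrite lt_min d10 d20.
move=> h Ph; rewrite lt_min => /andP[h1 h2].
apply: (le_trans (ler_normD _ _)).
have := H1 h Ph h1; have := H2 h Ph h2; lra.
Qed.

Lemma smallZ c Q : small Q -> small (fun h => c * Q h).
Proof.
move=> s e e0.
have c0 : 0 < `|c| + 1 by rewrite ltr_wpDl.
have [d d0 H] := s (e / (`|c| + 1)) (divr_gt0 e0 c0).
exists d => // h Ph hd; rewrite normrM.
have H' := H h Ph hd.
have Sg := S1_ge0 h.
have : `|c| * `|Q h| <= `|c| * (e / (`|c| + 1) * S1 h) by rewrite ler_wpM2l.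
have : e / (`|c| + 1) * (`|c| + 1) = e by rewrite mulfVK // gt_eqF.
have := normr_ge0 c.
have := divr_gt0 e0 c0.
move: (e / (`|c| + 1)) => a. nra.
Qed.

Lemma smallN Q : small Q -> small (fun h => - Q h).
Proof. by move=> s; apply: small_ext (smallZ (-1) s) => h _; rewrite mulN1r. Qed.

Lemma smallB Q1 Q2 : small Q1 -> small Q2 -> small (fun h => Q1 h - Q2 h).
Proof. by move=> s1 s2; apply: smallD s1 (smallN s2). Qed.

Lemma small_sum (I : Type) (r : seq I) (Pr : pred I) (F : I -> 'cV[R]_N -> R) :
  (forall i, Pr i -> small (F i)) -> small (fun h => \sum_(i <- r | Pr i) F i h).
Proof.
move=> H; elim: r => [|i r IH].
  by apply: small_ext small0 => h _; rewrite big_nil.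
case Pi: (Pr i).
  by apply: small_ext (smallD (H i Pi) IH) => h _; rewrite big_cons Pi.
by apply: small_ext IH => h _; rewrite big_cons Pi.
Qed.

Lemma small_bnd Q : small Q -> bnd Q.
Proof. by move=> s; exists 1 => //; apply: s. Qed.

Lemma bnd_entry i : bnd (fun h => h i 0).
Proof. by exists 1 => //; exists 1 => // h _ _; rewrite mul1r le_entry_S1. Qed.

Lemma bndD Q1 Q2 : bnd Q1 -> bnd Q2 -> bnd (fun h => Q1 h + Q2 h).
Proof.
move=> [M1 M10 [d1 d10 H1]] [M2 M20 [d2 d20 H2]].
exists (M1 + M2); first exact: addr_gt0.
exists (Num.min d1 d2); first by rewrite lt_min d10 d20.
move=> h Ph; rewrite lt_min => /andP[h1 h2].
apply: (le_trans (ler_normD _ _)).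
have := H1 h Ph h1; have := H2 h Ph h2; lra.
Qed.

Lemma bndZ c Q : bnd Q -> bnd (fun h => c * Q h).
Proof.
move=> [M M0 [d d0 H]].
exists ((`|c| + 1) * M); first by rewrite mulr_gt0 // ltr_wpDl.
exists d => // h Ph hd; rewrite normrM.
have H' := H h Ph hd.
have Sg := S1_ge0 h.
have := normr_ge0 c; have := normr_ge0 (Q h). nra.
Qed.

Lemma bnd_sum (I : Type) (r : seq I) (Pr : pred I) (F : I -> 'cV[R]_N -> R) :
  (forall i, Pr i -> bnd (F i)) -> bnd (fun h => \sum_(i <- r | Pr i) F i h).
Proof.
move=> H; elim: r => [|i r IH].
  by apply: bnd_ext (small_bnd small0) => h _; rewrite big_nil.
case Pi: (Pr i).
  by apply: bnd_ext (bndD (H i Pi) IH) => h _; rewrite big_cons Pi.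
by apply: bnd_ext IH => h _; rewrite big_cons Pi.
Qed.

Lemma bnd_mul Q1 Q2 : bnd Q1 -> bnd Q2 -> small (fun h => Q1 h * Q2 h).
Proof.
move=> [M1 M10 [d1 d10 H1]] [M2 M20 [d2 d20 H2]] e e0.
have M0 : 0 < M1 * M2 by rewrite mulr_gt0.
exists (Num.min (Num.min d1 d2) (e / (M1 * M2))).
  by rewrite !lt_min d10 d20 divr_gt0.
move=> h Ph; rewrite !lt_min => /andP[/andP[h1 h2] h3].
have := H1 h Ph h1; have := H2 h Ph h2.
have Sg := S1_ge0 h.
have E : e / (M1 * M2) * (M1 * M2) = e by rewrite mulfVK // gt_eqF.
move: h3 E; move: (e / (M1 * M2)) => a h3 E.
rewrite normrM.
have := normr_ge0 (Q1 h); have := normr_ge0 (Q2 h).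
move=> q2 q1 b2 b1.
have L : `|Q1 h| * `|Q2 h| <= (M1 * S1 h) * (M2 * S1 h) by apply: ler_pM.
apply: (le_trans L).
have -> : M1 * S1 h * (M2 * S1 h) = (M1 * M2 * S1 h) * S1 h by ring.
rewrite -E mulrC [a * _]mulrC mulrA ler_wpM2r //.
by rewrite mulrC ler_wpM2l ?ltW // mulr_ge0 ?ltW.
Qed.

Lemma small_zero : (forall i, small (fun h => h i 0)) ->
  exists2 d : R, 0 < d & forall h, P h -> S1 h < d -> h = 0.
Proof.
move=> H.
have sS : small (fun h => S1 h).
  have Hs : forall i, xpredT i -> small (fun h => `|h i 0|).
    move=> i _ e e0.
    have [d d0 Hd] := H i e e0; exists d => // h Ph hd; rewrite normr_id; exact: Hd.
  exact: (small_ext _ (small_sum (index_enum 'I_N) Hs)).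
have h2 : 0 < 1 / 2 :> R by lra.
have [d d0 Hd] := sS (1/2) h2.
exists d => // h Ph hd.
have := Hd h Ph hd; rewrite ger0_norm ?S1_ge0 // => le.
have S0 : S1 h = 0 by have := S1_ge0 h; lra.
apply/matrixP => i j; rewrite (ord1 j) mxE; apply/normr0_eq0.
by apply/le_anti; rewrite normr_ge0 -S0 le_entry_S1.
Qed.

Lemma small_col m1 m2 (U : 'cV[R]_N -> 'cV[R]_m1) (D : 'cV[R]_N -> 'cV[R]_m2) :
  (forall i, small (fun h => U h i 0)) -> (forall i, small (fun h => D h i 0)) ->
  forall r, small (fun h => col_mx (U h) (D h) r 0).
Proof.
move=> HU HD r; rewrite -(splitK r); case: (fintype.split r) => i /=.
  by apply: small_ext (HU i) => h _; rewrite col_mxEu.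
by apply: small_ext (HD i) => h _; rewrite col_mxEd.
Qed.
End Small.

Lemma S1_col m1 m2 (u : 'cV[R]_(m1 + m2)) : S1 u = S1 (usubmx u) + S1 (dsubmx u).
Proof. by rewrite /S1 big_split_ord /=; congr (_ + _); apply: eq_bigr => i _; rewrite mxE. Qed.

Lemma S1_u m1 m2 (u : 'cV[R]_(m1 + m2)) : S1 (usubmx u) <= S1 u.
Proof. by rewrite (S1_col u) lerDl S1_ge0. Qed.

Lemma S1_d m1 m2 (u : 'cV[R]_(m1 + m2)) : S1 (dsubmx u) <= S1 u.
Proof. by rewrite (S1_col u) lerDr S1_ge0. Qed.

Lemma keyD (n : nat) (f : 'cV[R]_n -> R) (x : 'cV[R]_n) :
  differentiable f x -> forall e : R, 0 < e -> exists2 d : R, 0 < d &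
  forall h : 'cV[R]_n, `|h| < d -> `|f (x + h) - f x - 'd f x h| <= e * `|h|.
Proof.
move=> df e e0.
have := diff_locally df.
move/eqaddoP => /(_ e e0).
move/nbhs_norm0P => [d d0 Hd]; exists d => // h hd.
by have := Hd h hd; rewrite /= !fctE [h + x]addrC opprD addrA.
Qed.

Lemma small_rem N n (P : 'cV[R]_N -> Prop) (g : 'cV[R]_N -> 'cV[R]_n)
  (f : 'cV[R]_n -> R) (x : 'cV[R]_n) :
  (forall h, S1 (g h) <= S1 h) -> differentiable f x ->
  small P (fun h => f (x + g h) - f x - \sum_j (g h) j 0 * pderiv f j x).
Proof.
move=> Hg df e e0; have [d d0 Hd] := keyD df e0; exists d => // h _ hd.
have hd' : `|g h| < d by apply: le_lt_trans (mxnorm_le_S1 _) (le_lt_trans (Hg h) hd).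
have := Hd (g h) hd'; rewrite dlin // => /le_trans; apply.
apply: ler_wpM2l; [exact: ltW|exact: le_trans (mxnorm_le_S1 _) (Hg h)]. Qed.

Lemma bnd_g N n (P : 'cV[R]_N -> Prop) (g : 'cV[R]_N -> 'cV[R]_n) j :
  (forall h, S1 (g h) <= S1 h) -> bnd P (fun h => g h j 0).
Proof.
move=> Hg; exists 1 => //; exists 1 => // h _ _; rewrite mul1r.
exact: le_trans (le_entry_S1 _ _) (Hg h).
Qed.
End S.
From mathcomp Require Import ring lra.
Section Main.
Variables (R : realType) (n q p : nat) (A : 'M[R]_(q, n)) (b : 'cV[R]_q)
  (c : 'cV[R]_n -> 'cV[R]_p) (eps : R) (x : 'cV[R]_n) (yE : 'cV[R]_q) (yI zI : 'cV[R]_p).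

Local Notation N := (n + q + p + p)%N.
Local Notation Jc := (jacob c x).
Local Notation H := (\sum_(i < p) yI i 0 *: hessian (compf c i) x).
Local Notation Dy := (JyPsi eps yI zI).
Local Notation Dz := (JzPsi eps yI zI).
Local Notation J := (JF A c eps x yE yI zI).

Lemma Jmul (d : 'cV[R]_N) : J *m d =
  col_mx (col_mx (col_mx (H *m wx d + A^T *m wyE d + Jc^T *m wyI d)
                         (A *m wx d + wyE d))
                 (Jc *m wx d + wyI d - wzI d))
         (Dy *m wyI d + Dz *m wzI d).
Proof.
rewrite /JF /wx /wyE /wyI /wzI.
rewrite -{1}[d]vsubmxK -{1}[usubmx d]vsubmxK -{1}[usubmx (usubmx d)]vsubmxK.
rewrite !mul_col_mx !mul_row_col !mul0mx !mul1mx !addr0 !add0r mulNmx.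
by rewrite mul1mx.
Qed.

Lemma wblocks (h : 'cV[R]_N) :
  [/\ wx (stack x yE yI zI + h) = x + wx h, wyE (stack x yE yI zI + h) = yE + wyE h,
      wyI (stack x yE yI zI + h) = yI + wyI h & wzI (stack x yE yI zI + h) = zI + wzI h].
Proof.
by rewrite /wx /wyE /wyI /wzI /stack !linearD /= !col_mxKu !col_mxKd.
Qed.

Lemma wstack : [/\ wx (stack x yE yI zI) = x, wyE (stack x yE yI zI) = yE,
      wyI (stack x yE yI zI) = yI & wzI (stack x yE yI zI) = zI].
Proof. by rewrite /wx /wyE /wyI /wzI /stack !col_mxKu !col_mxKd. Qed.

Lemma stack_w (d : 'cV[R]_N) : d = stack (wx d) (wyE d) (wyI d) (wzI d).
Proof. by rewrite /stack /wx /wyE /wyI /wzI !vsubmxK. Qed.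

Lemma Fmap0 x' yE' yI' zI' : Fmap A b c eps x' yE' yI' zI' = 0 ->
  [/\ A^T *m yE' + (jacob c x')^T *m yI' = 0, A *m x' - b + yE' = 0,
      c x' + yI' - zI' = 0 & forall i, psi eps (yI' i 0) (zI' i 0) = 0].
Proof.
move/eqP; rewrite /Fmap /Gmap !col_mx_eq0 => /andP[/andP[/andP[/eqP -> /eqP ->] /eqP ->] /eqP P0].
split=> // i; have := congr1 (fun M : 'cV[R]_p => M i 0) P0; by rewrite !mxE.
Qed.


Lemma entryD a1 a2 (M M' : 'M[R]_(a1, a2)) i j : (M + M') i j = M i j + M' i j.
Proof. by rewrite mxE. Qed.
Lemma entryN a1 a2 (M : 'M[R]_(a1, a2)) i j : (- M) i j = - M i j.
Proof. by rewrite mxE. Qed.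
Lemma entry0 a1 a2 i j : (0 : 'M[R]_(a1, a2)) i j = 0.
Proof. by rewrite mxE. Qed.

Lemma psi0 a bb : 0 < eps -> psi eps a bb = 0 ->
  [/\ a * bb = eps ^+ 2, 0 < a + bb & Num.sqrt (a ^+ 2 + bb ^+ 2 + 2 * eps ^+ 2) = a + bb].
Proof.
move=> e0; rewrite /psi => /eqP; rewrite subr_eq0 => /eqP E.
have s0 : 0 <= a ^+ 2 + bb ^+ 2 + 2 * eps ^+ 2.
  by rewrite !addr_ge0 ?sqr_ge0 // mulr_ge0 // sqr_ge0.
have E2 := sqr_sqrtr s0; rewrite -E in E2.
have ab : a * bb = eps ^+ 2.
  move: E2; rewrite !expr2 => E2; nra.
have ge : 0 <= a + bb by rewrite E sqrtr_ge0.
split=> //.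
rewrite lt_neqAle ge andbT; apply/eqP => E0.
move: E2; rewrite -E0 expr2 mul0r => E2.
have : 0 < eps ^+ 2 by rewrite exprn_gt0.
move: E2; rewrite !expr2 => E2; nra.
Qed.

Lemma diag_mulE (f : 'I_p -> R) (v : 'cV[R]_p) i :
  ((\matrix_(i0, j) (if i0 == j then f i0 else 0)) *m v) i 0 = f i * v i 0.
Proof.
rewrite mxE (bigD1 i) //= mxE eqxx big1 ?addr0 // => j /negbTE ji.
by rewrite mxE eq_sym ji mul0r.
Qed.

Lemma DyE (v : 'cV[R]_p) i : (Dy *m v) i 0 =
  (1 - yI i 0 / Num.sqrt (yI i 0 ^+ 2 + zI i 0 ^+ 2 + 2 * eps ^+ 2)) * v i 0.
Proof. exact: (diag_mulE (fun i => 1 - yI i 0 / Num.sqrt (yI i 0 ^+ 2 + zI i 0 ^+ 2 + 2 * eps ^+ 2))). Qed.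

Lemma DzE (v : 'cV[R]_p) i : (Dz *m v) i 0 =
  (1 - zI i 0 / Num.sqrt (yI i 0 ^+ 2 + zI i 0 ^+ 2 + 2 * eps ^+ 2)) * v i 0.
Proof. exact: (diag_mulE (fun i => 1 - zI i 0 / Num.sqrt (yI i 0 ^+ 2 + zI i 0 ^+ 2 + 2 * eps ^+ 2))). Qed.

Local Notation S := (H - A^T *m A - Jc^T *m Dz *m Jc).

Lemma kerJ : 0 < eps -> (forall i, psi eps (yI i 0) (zI i 0) = 0) -> S \in unitmx ->
  forall d : 'cV[R]_N, J *m d = 0 -> d = 0.
Proof.
move=> e0 Hpsi Hu d.
rewrite Jmul => /eqP; rewrite !col_mx_eq0 => /andP[/andP[/andP[/eqP E1 /eqP E2] /eqP E3] /eqP E4].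
have dyE : wyE d = - (A *m wx d).
  by apply/eqP; rewrite -addr_eq0 addrC E2.
have dzI : wzI d = Jc *m wx d + wyI d.
  by apply/eqP; rewrite eq_sym -subr_eq0 E3.
have dyI : wyI d = - (Dz *m (Jc *m wx d)).
  apply/matrixP => i j; rewrite (ord1 j) entryN DzE.
  have := congr1 (fun M : 'cV[R]_p => M i 0) E4.
  rewrite entryD entry0 DyE DzE dzI entryD.
  have [ab s0 sq] := psi0 e0 (Hpsi i).
  rewrite sq.
  set u := wyI d i 0; set v := (Jc *m wx d) i 0.
  have hs : (1 - yI i 0 / (yI i 0 + zI i 0)) + (1 - zI i 0 / (yI i 0 + zI i 0)) = 1.
    by field; rewrite gt_eqF.
  move: hs; set Dyi := (1 - yI i 0 / _); set Dzi := (1 - zI i 0 / _) => hs.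
  have uE : u = (Dyi + Dzi) * u by rewrite hs mul1r.
  lra.
have Sdx : S *m wx d = 0.
  rewrite !mulmxBl -!mulmxA -E1 dyE dyI !mulmxN.
  by [].
have dx0 : wx d = 0 by rewrite -(mulKmx Hu (wx d)) Sdx mulmx0.
have dyI0 : wyI d = 0 by rewrite dyI dx0 !mulmx0 oppr0.
have dyE0 : wyE d = 0 by rewrite dyE dx0 mulmx0 oppr0.
have dzI0 : wzI d = 0 by rewrite dzI dx0 dyI0 mulmx0 addr0.
by rewrite (stack_w d) dx0 dyE0 dyI0 dzI0 /stack !col_mx0.
Qed.

Lemma unitJ : 0 < eps -> (forall i, psi eps (yI i 0) (zI i 0) = 0) -> S \in unitmx ->
  J \in unitmx.
Proof.
move=> e0 Hpsi Hu.
rewrite -unitmx_tr -row_free_unit -kermx_eq0; apply/eqP/row_matrixP => i.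
rewrite row0.
have /sub_kermxP K : (row i (kermx J^T) <= kermx J^T)%MS by exact: row_sub.
have : J *m (row i (kermx J^T))^T = 0.
  by have := congr1 trmx K; rewrite trmx_mul trmxK trmx0.
move/(kerJ e0 Hpsi Hu)/(congr1 trmx); rewrite trmxK trmx0 => ->.
by [].
Qed.

Local Notation w := (stack x yE yI zI).
Definition Pw (h : 'cV[R]_N) := Phi A b c eps (w + h).

Lemma Pw_eqs h : Pw h ->
  [/\ A^T *m (yE + wyE h) + (jacob c (x + wx h))^T *m (yI + wyI h) = 0,
      A *m (x + wx h) - b + (yE + wyE h) = 0,
      c (x + wx h) + (yI + wyI h) - (zI + wzI h) = 0 &
      forall i, psi eps ((yI + wyI h) i 0) ((zI + wzI h) i 0) = 0].
Proof. rewrite /Pw /Phi /=; have [-> -> -> ->] := wblocks h; exact: Fmap0. Qed.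

Lemma w_eqs : Phi A b c eps w ->
  [/\ A^T *m yE + Jc^T *m yI = 0, A *m x - b + yE = 0, c x + yI - zI = 0 &
      forall i, psi eps (yI i 0) (zI i 0) = 0].
Proof. rewrite /Phi /=; have [-> -> -> ->] := wstack; exact: Fmap0. Qed.

Lemma S1_wx (h : 'cV[R]_N) : S1 (wx h) <= S1 h.
Proof. exact: le_trans (S1_u _) (le_trans (S1_u _) (S1_u _)). Qed.
Lemma S1_wyE (h : 'cV[R]_N) : S1 (wyE h) <= S1 h.
Proof. exact: le_trans (S1_d _) (le_trans (S1_u _) (S1_u _)). Qed.
Lemma S1_wyI (h : 'cV[R]_N) : S1 (wyI h) <= S1 h.
Proof. exact: le_trans (S1_d _) (S1_u _). Qed.
Lemma S1_wzI (h : 'cV[R]_N) : S1 (wzI h) <= S1 h.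
Proof. exact: S1_d. Qed.

Lemma JcE (x' : 'cV[R]_n) (v : 'cV[R]_n) i :
  (jacob c x' *m v) i 0 = \sum_j v j 0 * pderiv (compf c i) j x'.
Proof. by rewrite mxE; apply: eq_bigr => j _; rewrite mxE mulrC. Qed.

Lemma JcTE (x' : 'cV[R]_n) (u : 'cV[R]_p) j :
  ((jacob c x')^T *m u) j 0 = \sum_i pderiv (compf c i) j x' * u i 0.
Proof. by rewrite mxE; apply: eq_bigr => i _; rewrite !mxE. Qed.

Lemma HE (v : 'cV[R]_n) j : (H *m v) j 0 =
  \sum_i yI i 0 * \sum_k (v k 0 * pderiv (pderiv (compf c i) j) k x).
Proof.
rewrite mulmx_suml summxE; apply: eq_bigr => i _.
rewrite -scalemxAl mxE mxE; congr (_ * _); apply: eq_bigr => k _.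
by rewrite mxE mulrC.
Qed.

Section Blocks.
Variable Hw : Phi A b c eps w.
Variable e0 : 0 < eps.
Variable dc : forall i, differentiable (compf c i) x.
Variable dc2 : forall i j, differentiable (pderiv (compf c i) j) x.

Lemma small2 i : small Pw (fun h => (A *m wx h + wyE h) i 0).
Proof.
apply: small_ext (small0 _) => h /Pw_eqs [_ E2 _ _].
have [_ F2 _ _] := w_eqs Hw.
have := congr1 (fun M : 'cV[R]_q => M i 0) E2.
have := congr1 (fun M : 'cV[R]_q => M i 0) F2.
rewrite mulmxDr !(entryD, entryN, entry0); lra.
Qed.

Lemma small3 i : small Pw (fun h => (Jc *m wx h + wyI h - wzI h) i 0).
Proof.
apply: small_ext (smallN (small_rem Pw S1_wx (dc i))) => h /Pw_eqs [_ _ E3 _].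
have [_ _ F3 _] := w_eqs Hw.
have := congr1 (fun M : 'cV[R]_p => M i 0) E3.
have := congr1 (fun M : 'cV[R]_p => M i 0) F3.
rewrite !(entryD, entryN, entry0) JcE /compf; lra.
Qed.

Lemma small4 i : small Pw (fun h => (Dy *m wyI h + Dz *m wzI h) i 0).
Proof.
have [_ _ _ Hp] := w_eqs Hw.
have [ab s0 sq] := psi0 e0 (Hp i).
apply: small_ext (bnd_mul (bndZ (- (yI i 0 + zI i 0)^-1) (bnd_g Pw i S1_wzI))
                          (bnd_g Pw i S1_wyI)) => h /Pw_eqs [_ _ _ E4].
have [ab' _ _] := psi0 e0 (E4 i).
move: ab'; rewrite !entryD => ab'.
rewrite DyE DzE sq.
have s0' : yI i 0 + zI i 0 != 0 by rewrite gt_eqF.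
have E : zI i 0 * wyI h i 0 + yI i 0 * wzI h i 0 = - (wyI h i 0 * wzI h i 0).
  by move: ab ab'; rewrite !expr2 => ab ab'; nra.
transitivity ((zI i 0 * wyI h i 0 + yI i 0 * wzI h i 0) / (yI i 0 + zI i 0)).
  by rewrite E; field.
by field.
Qed.

Lemma small1 j : small Pw (fun h => (H *m wx h + A^T *m wyE h + Jc^T *m wyI h) j 0).
Proof.
pose G (i : 'I_p) (h : 'cV[R]_N) := pderiv (compf c i) j (x + wx h) - pderiv (compf c i) j x
   - \sum_k (wx h) k 0 * pderiv (pderiv (compf c i) j) k x.
pose L i (h : 'cV[R]_N) := \sum_k (wx h) k 0 * pderiv (pderiv (compf c i) j) k x.
have sG : forall i, small Pw (G i) by move=> i; exact: (small_rem Pw S1_wx (dc2 i j)).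
have bL : forall i, bnd Pw (L i).
  move=> i; apply: bnd_sum => k _.
  apply: bnd_ext (bndZ (pderiv (pderiv (compf c i) j) k x) (bnd_g Pw k S1_wx)) => h _.
  by rewrite mulrC.
have sT : forall i, xpredT i -> small Pw (fun h => - (yI i 0) * G i h - (G i h + L i h) * wyI h i 0).
  move=> i _; apply: smallB; first exact: smallZ.
  exact: bnd_mul (bndD (small_bnd (sG i)) (bL i)) (bnd_g Pw i S1_wyI).
apply: small_ext (small_sum (index_enum 'I_p) sT) => h /Pw_eqs [E1 _ _ _].
have [F1 _ _ _] := w_eqs Hw.
have := congr1 (fun M : 'cV[R]_n => M j 0) E1.
have := congr1 (fun M : 'cV[R]_n => M j 0) F1.
rewrite !mulmxDr !entryD entry0 !JcTE HE.
have Esum : \sum_(i < p) ((- (yI i 0) * G i h - (G i h + L i h) * wyI h i 0)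
   - (yI i 0 * \sum_k (wx h k 0 * pderiv (pderiv (compf c i) j) k x) + pderiv (compf c i) j x * wyI h i 0)
   + (pderiv (compf c i) j (x + wx h) * yI i 0 + pderiv (compf c i) j (x + wx h) * wyI h i 0)
   - pderiv (compf c i) j x * yI i 0) = 0.
  by rewrite big1 // => i _; rewrite /G /L; ring.
rewrite !(sumrB, big_split) /= in Esum.
move=> Fj Ej; rewrite !(sumrB, big_split) /=; lra.
Qed.

Lemma isolated : S \in unitmx ->
  exists2 d : R, 0 < d & forall h, Pw h -> S1 h < d -> h = 0.
Proof.
move=> Hu.
have [_ _ _ Hp] := w_eqs Hw.
have uJ := unitJ e0 Hp Hu.
have rows : forall r, small Pw (fun h => (J *m h) r 0).
  move=> r.
  have := small_col
    (U := fun h => col_mx (col_mx (H *m wx h + A^T *m wyE h + Jc^T *m wyI h)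
                         (A *m wx h + wyE h))
                 (Jc *m wx h + wyI h - wzI h))
    (D := fun h => Dy *m wyI h + Dz *m wzI h)
    (small_col
      (U := fun h => col_mx (H *m wx h + A^T *m wyE h + Jc^T *m wyI h)
                         (A *m wx h + wyE h))
      (D := fun h => Jc *m wx h + wyI h - wzI h)
      (small_col
        (U := fun h => H *m wx h + A^T *m wyE h + Jc^T *m wyI h)
        (D := fun h => A *m wx h + wyE h) small1 small2) small3) small4 r.
  by apply: small_ext => h _; rewrite Jmul.
apply: small_zero => i.
have sT : forall r, xpredT r -> small Pw (fun h => invmx J i r * (J *m h) r 0).
  by move=> r _; apply: smallZ.
apply: small_ext (small_sum (index_enum _) sT) => h _.
by rewrite -[in RHS](mulKmx uJ h) [in RHS]mxE.
Qed.

End Blocks.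
End Main.

Lemma entry_le_enorm (R : realType) N (h : 'cV[R]_N) i : `|h i 0| <= enorm h.
Proof.
rewrite /enorm /dotv -sqrtr_sqr ler_sqrt; last first.
  by apply: sumr_ge0 => j _; rewrite -expr2 sqr_ge0.
rewrite (bigD1 i) //= expr2 lerDl; apply: sumr_ge0 => j _; rewrite -expr2 sqr_ge0. by [].
Qed.

Lemma S1_le_enorm (R : realType) N (h : 'cV[R]_N) : S1 h <= N%:R * enorm h.
Proof.
rewrite /S1 (@le_trans _ _ (\sum_(i < N) enorm h)) //.
  by apply: ler_sum => i _; exact: entry_le_enorm.
by rewrite sumr_const card_ord mulr_natl.
Qed.

Lemma enorm0 (R : realType) N : enorm (0 : 'cV[R]_N) = 0.
Proof. by rewrite /enorm /dotv big1 ?sqrtr0 // => i _; rewrite mxE mul0r. Qed.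

Lemma dotv0 (R : realType) N (v : 'cV[R]_N) : dotv v 0 = 0.
Proof. by rewrite /dotv big1 // => i _; rewrite mxE mulr0. Qed.

Unset Implicit Arguments.

Theorem proposition4p1 (R : realType) (n q p : nat)
  (A : 'M[R]_(q, n)) (b : 'cV[R]_q) (c : 'cV[R]_n -> 'cV[R]_p) (eps : R)
  (x : 'cV[R]_n) (yE : 'cV[R]_q) (yI zI : 'cV[R]_p) :
  (forall i : 'I_p, concave_fun (compf c i) /\ C2 (compf c i)) ->
  0 < eps ->
  Phi A b c eps (stack x yE yI zI) ->
  (\sum_(i < p) yI i 0 *: hessian (compf c i) x - A^T *m A
     - (jacob c x)^T *m JzPsi eps yI zI *m jacob c x) \in unitmx ->
  let J := JF A c eps x yE yI zI in
  [/\ \rank J = (n + q + p + p)%N,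
      tangent_cone (Phi A b c eps) (stack x yE yI zI) = [set d | J *m d = 0],
      limiting_normal_cone (Phi A b c eps) (stack x yE yI zI)
        = regular_normal_cone (Phi A b c eps) (stack x yE yI zI) &
      regular_normal_cone (Phi A b c eps) (stack x yE yI zI)
        = [set J^T *m u | u in [set: 'cV[R]_(n + q + p + p)]]].
Proof.
move=> Hc e0 Hw Hu J.
have dc : forall i, differentiable (compf c i) x by move=> i; exact: (Hc i).2.1.
have dc2 : forall i j, differentiable (pderiv (compf c i) j) x by move=> i j; exact: (Hc i).2.2.1.
have [_ _ _ Hp] := w_eqs Hw.
have uJ : J \in unitmx by exact: unitJ.
have [d d0 iso] := isolated Hw e0 dc dc2 Hu.
have N1 : 0 < (n + q + p + p)%:R + 1 :> R by rewrite ltr_wpDl.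
have d'0 : 0 < d / ((n + q + p + p)%:R + 1) by rewrite divr_gt0.
have dlt : forall a : R, 0 <= a -> a < d / ((n + q + p + p)%:R + 1) -> (n + q + p + p)%:R * a < d.
  move=> a a0 ad.
  have : a * ((n + q + p + p)%:R + 1) < d by rewrite -ltr_pdivlMr.
  have : 0 <= (n + q + p + p)%:R :> R by [].
  nra.
have reg_all : forall v, regular_normal_cone (Phi A b c eps) (stack x yE yI zI) v.
  move=> v; split => // e ep; exists (d / ((n + q + p + p)%:R + 1)) => // y Py yd.
  have Ph : Pw A b c eps x yE yI zI (y - stack x yE yI zI).
    by rewrite /Pw addrC subrK.
  have Sd : S1 (y - stack x yE yI zI) < d.
    apply: le_lt_trans (S1_le_enorm _) (dlt _ _ yd).
    by rewrite /enorm sqrtr_ge0.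
  by rewrite (iso _ Ph Sd) dotv0 enorm0 mulr0.
split.
- exact: mxrank_unit.
- apply/seteqP; split => v /=.
  + move=> [t [u [tpos tcvg ucvg Hin]]].
    have tu : (fun k => t k *: u k) @ \oo --> (0 : 'cV[R]_(n + q + p + p)).
      by rewrite -(scale0r v); apply: cvgZ.
    move/cvgr0_norm_lt: tu => /(_ _ d'0) Hn.
    have Hu0 : \forall k \near \oo, u k = 0.
      near=> k.
      have Ph : Pw A b c eps x yE yI zI (t k *: u k) by exact: Hin.
      have Sd : S1 (t k *: u k) < d.
        apply: le_lt_trans (S1_le_mxnorm _) (dlt _ _ _) => //.
        by near: k.
      have := iso _ Ph Sd; move/eqP; rewrite scaler_eq0 gt_eqF //=.
      by move/eqP.
    have Hv : forall e, 0 < e -> `|v| < e.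
      move=> e ep.
      near \oo => k.
      have uk : u k = 0 by apply: (near Hu0 k).
      have -> : v = v - u k by rewrite uk subr0.
      near: k; exact: cvgr_dist_lt ucvg e ep.
    have v0 : v = 0.
      apply/eqP; apply/negP => /negP vn0.
      have vp : 0 < `|v| by rewrite normr_gt0.
      by have := Hv _ vp; rewrite ltxx.
    by rewrite v0 mulmx0.
  + move=> Jv.
    have v0 : v = 0 by exact: (kerJ e0 Hp Hu Jv).
    exists harmonic, (fun=> 0); split.
    * by move=> k; exact: harmonic_gt0.
    * exact: cvg_harmonic.
    * by rewrite v0; exact: cvg_cst.
    * by move=> k; rewrite scaler0 addr0.
- apply/seteqP; split => v _; first exact: reg_all.
  split => //.
  exists (fun=> stack x yE yI zI), (fun=> v); split => //.
  + exact: cvg_cst.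
  + exact: cvg_cst.
- apply/seteqP; split => v _; last exact: reg_all.
  exists (invmx J^T *m v) => //.
  by rewrite mulKVmx // unitmx_tr.
Unshelve. all: by end_near.
Qed.
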